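(* Let $\mathcal{D}_0=\{\mathbf{x}^{(0)}_i\}_{i=1}^{n_0}$ and $\mathcal{D}_1=\{\mathbf{x}^{(1)}_j\}_{j=1}^{n_1}$ be finite sets of inputs with $n_0=n_1$, and let $f:\mathbb{R}^d\times\{0,1\}\to[0,1]$ be a model such that for each $s\in\{0,1\}$ there are no ties in $\{f_s(\mathbf{x}):\mathbf{x}\in\mathcal{D}_s\}$, where $f_s(\cdot)=f(\cdot,s)$. Let $\mathbf{T}^f$ be the fair matching function of $f$ computed with the empirical (uniform) distributions on $\mathcal{D}_0$ and $\mathcal{D}_1$. Then for any $s\in\{0,1\}$ and any $\mathbf{x}\in\mathcal{D}_s$, the matched individual is $\mathbf{T}^f(\mathbf{x})=f_{s'}^{-1}\circ F_{s'}^{-1}\circ F_s\circ f_s(\mathbf{x})$, where $s'=1-s$.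
   Context: $F_s$ denotes the (empirical) cumulative distribution function of the values $f_s(\mathbf{x})$, $\mathbf{x}\in\mathcal{D}_s$; $F_{s'}^{-1}$ is its quantile (inverse) function; and $f_{s'}^{-1}$ denotes the inverse of $f_{s'}$ restricted to $\mathcal{D}_{s'}$ (well defined since there are no ties). With $n_0=n_1$, a transport map from the empirical distribution on $\mathcal{D}_s$ to that on $\mathcal{D}_{s'}$ is a bijection $\mathbf{T}:\mathcal{D}_s\to\mathcal{D}_{s'}$. For such $\mathbf{T}_s$, $\Delta\mathrm{MDP}(f,\mathbf{T}_s)=\frac{1}{n_s}\sum_{\mathbf{x}\in\mathcal{D}_s}|f(\mathbf{x},s)-f(\mathbf{T}_s(\mathbf{x}),s')|$. The fair matching function of $f$ is defined as follows: $\mathbf{T}^f_s:=\arg\min_{\mathbf{T}_s}\Delta\mathrm{MDP}(f,\mathbf{T}_s)$ over transport maps from $\mathcal{D}_s$ to $\mathcal{D}_{s'}$, $\hat s:=\arg\min_{s\in\{0,1\}}\Delta\mathrm{MDP}(f,\mathbf{T}^f_s)$, and $\mathbf{T}^f:=\mathbf{T}^f_{\hat s}$. *)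

(* Defs.v *)
From HB Require Import structures.
From mathcomp Require Import all_boot all_order all_algebra all_fingroup.
From mathcomp Require Import classical_sets reals.
Set Implicit Arguments. Unset Strict Implicit. Unset Printing Implicit Defensive.
Import Order.TTheory GRing.Theory Num.Theory.
Local Open Scope ring_scope.
Local Open Scope classical_set_scope.

Section FairMatching.
Variables (R : realType) (d n : nat).
(* D_s = { X s i | i < n }  (n = n_0 = n_1), inputs in R^d (row vectors) *)
Variable X : bool -> 'I_n -> 'rV[R]_d.
Variable f : 'rV[R]_d -> bool -> R.

Definition ecdf (s : bool) (t : R) : R :=
  #|[set i : 'I_n | f (X s i) s <= t]|%:R / n%:R.

Definition equantile (s : bool) (p : R) : R :=
  inf [set t : R | p <= ecdf s t].

(* transport maps D_s -> D_{s'} (bijections) are encoded by permutations: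
   T(X s i) = X (~~ s) (sigma i). *)
Definition DeltaMDP (s : bool) (sigma : {perm 'I_n}) : R :=
  n%:R^-1 * \sum_(i < n) `|f (X s i) s - f (X (~~ s) (sigma i)) (~~ s)|.

Definition is_fair_matching (s : bool) (sigma : {perm 'I_n}) : Prop :=
  forall tau : {perm 'I_n}, DeltaMDP s sigma <= DeltaMDP s tau.
End FairMatching.

(* Main.v *)
Require Import Defs.
From HB Require Import structures.
From mathcomp Require Import all_boot all_order all_algebra all_fingroup.
From mathcomp Require Import classical_sets reals.
From mathcomp Require Import lra.
Import Order.TTheory GRing.Theory Num.Theory.
Local Open Scope ring_scope.

Lemma four_point (R : realFieldType) (a1 a2 b1 b2 : R) :
  a1 < a2 -> b2 < b1 -> `|a1 - b2| + `|a2 - b1| <= `|a1 - b1| + `|a2 - b2|.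
Proof.
move=> h1 h2.
have l1 := ler_norm (a1 - b1). have l2 := ler_norm (- (a1 - b1)).
have l3 := ler_norm (a2 - b2). have l4 := ler_norm (- (a2 - b2)).
rewrite normrN in l2; rewrite normrN in l4.
have [h3|h3] := lerP 0 (a1 - b2);
  [rewrite (ger0_norm h3) | rewrite (ltr0_norm h3)];
have [h4|h4] := lerP 0 (a2 - b1);
  [rewrite (ger0_norm h4) | rewrite (ltr0_norm h4) | rewrite (ger0_norm h4) | rewrite (ltr0_norm h4)];
  lra.
Qed.

Lemma sum_swap (R : realFieldType) n (h : 'I_n -> 'I_n -> R) (t : {perm 'I_n}) (i k : 'I_n) :
  i != k ->
  \sum_j h j ((t * tperm (t i) (t k))%g j) - \sum_j h j (t j)
  = h i (t k) + h k (t i) - h i (t i) - h k (t k).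
Proof.
move=> ik.
have ki : k != i by rewrite eq_sym.
rewrite (bigD1 i isT) (bigD1 k ki) /= [in X in _ - X](bigD1 i isT) [in X in _ - X](bigD1 k ki) /=.
rewrite !permM tpermL tpermR.
rewrite (eq_bigr (fun j => h j (t j))); last first.
  move=> j /andP [ji jk]; rewrite permM tpermD //.
    by apply: contra ji => /eqP /perm_inj ->.
  by apply: contra jk => /eqP /perm_inj ->.
lra.
Qed.

Lemma card_cset (T : finType) (p : pred T) :
  #|classical_sets.mkset (fun x => is_true (p x))| = #|[set x | p x]|.
Proof.
apply: eq_card => x; rewrite finset.inE; apply/idP/idP.
  by rewrite in_setE.
by move=> h; rewrite in_setE.
Qed.

Theorem mainTheorem4 (R : realType) (d n : nat)
    (X : bool -> 'I_n -> 'rV[R]_d) (f : 'rV[R]_d -> bool -> R)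
    (f_range : forall x s, 0 <= f x s <= 1)
    (no_ties : forall s, injective (fun i : 'I_n => f (X s i) s)) :
  forall s : bool,
    exists2 sigma : {perm 'I_n},
      is_fair_matching X f s sigma &
      forall i : 'I_n,
        f (X (~~ s) (sigma i)) (~~ s)
        = equantile X f (~~ s) (ecdf X f s (f (X s i) s)).
Proof.
move=> s.
pose a := fun k => f (X s k) s.
pose b := fun j => f (X (~~ s) j) (~~ s).
have ainj : injective a := no_ties s.
have binj : injective b := no_ties (~~ s).
pose C := fun t : {perm 'I_n} => \sum_j `|a j - b (t j)|.
pose P := fun t : {perm 'I_n} => \sum_j a j * b (t j).
case: (@arg_minP _ _ {perm 'I_n} 1%g predT C isT) => t0 _ Hmin.
case: (@arg_maxP _ _ _ t0 [pred t | C t == C t0] P (eqxx _)) => t /eqP Ct Hmax.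
have Hopt : forall tau, C t <= C tau by move=> tau; rewrite Ct; exact: Hmin.
have mono : forall i k, a i < a k -> b (t i) < b (t k).
  move=> i k aik; rewrite ltNge; apply/negP => ble.
  have ik : i != k by apply: contraTneq aik => ->; rewrite ltxx.
  have tne : t i != t k by apply: contra ik => /eqP /perm_inj ->.
  have blt : b (t k) < b (t i).
    rewrite lt_neqAle ble andbT; apply: contra tne => /eqP h.
    by rewrite (binj _ _ h).
  pose t' := (t * tperm (t i) (t k))%g.
  have Cd := @sum_swap _ _ (fun j l => `|a j - b l|) t i k ik.
  have Pd := @sum_swap _ _ (fun j l => a j * b l) t i k ik.
  have fp := @four_point _ _ _ _ _ aik blt.
  have Cle : C t' <= C t by rewrite /C /t'; lra.
  have Ct' : C t' == C t0 by rewrite -Ct eq_le Cle Hopt.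
  have := Hmax t' Ct'.
  have : 0 < (a k - a i) * (b (t i) - b (t k)) by apply: mulr_gt0; rewrite subr_gt0.
  rewrite /P /t' /=; nra.
exists t.
  move=> tau; rewrite /DeltaMDP; apply: ler_wpM2l; first by rewrite invr_ge0 ler0n.
  exact: Hopt tau.
move=> i.
have n0 : (0 < n)%N := leq_ltn_trans (leq0n i) (ltn_ord i).
have n0R : 0 < (n%:R : R)^-1 by rewrite invr_gt0 ltr0n.
rewrite /equantile /ecdf card_cset -/(a i) -/(b (t i)).
set r := #|_|.
set E := (Y in inf Y).
have EP : forall x, E x <-> (r <= #|[set j : 'I_n | (b j <= x)%R]|)%N.
  move=> x; rewrite /E /= card_cset ler_pM2r // ler_nat; done.
have Hmem : E (b (t i)).
  apply/EP; rewrite /r -(card_imset _ (@perm_inj _ t)).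
  apply: subset_leq_card. apply/fintype.subsetP => j /imsetP [k]; rewrite inE => ak ->.
  rewrite inE; move: ak; rewrite le_eqVlt => /orP [/eqP /ainj -> | /mono /ltW] //.
have Hlb : lbound E (b (t i)).
  move=> x /EP Ex; rewrite leNgt; apply/negP => xlt.
  have h1 : (#|[set j : 'I_n | (b j <= x)%R]| <= #|[set k : 'I_n | (a k < a i)%R]|)%N.
    apply: leq_trans (leq_imset_card t _).
    apply: subset_leq_card; apply/fintype.subsetP => j; rewrite inE => bj.
    apply/imsetP; exists ((t^-1)%g j); last by rewrite permKV.
    rewrite inE ltNge; apply/negP; rewrite le_eqVlt => /orP [/eqP /ainj e | /mono h].
      by move: bj; rewrite -[j](permKV t) -e => /(lt_le_trans xlt); rewrite ltxx.
    by move: h; rewrite permKV => h; have := lt_le_trans h bj; rewrite ltNge (ltW xlt).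
  have h2 : (#|[set k : 'I_n | (a k < a i)%R]| < r)%N.
    apply: proper_card; apply/properP; split.
      by apply/fintype.subsetP => k; rewrite !inE => /ltW.
    by exists i; rewrite !inE ?ltxx.
  by move: (leq_trans Ex h1); rewrite leqNgt h2.
apply/le_anti/andP; split.
  by apply: lb_le_inf => //; exists (b (t i)).
by apply: ge_inf => //; exists (b (t i)).
Qed.
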